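(* Let $\alpha,\gamma,\kappa$ be constants and $n=2^t$ such that $$7n^2 \frac{(\gamma n)^{\kappa n}}{(\kappa n)!} +3n^3\frac{(2\gamma n)^{(1-\alpha-2\gamma)n/3}}{((1-\alpha-2\gamma)n/3)!} < 1.$$ Then for any $(\gamma n,\gamma n,\gamma n,\gamma n)$-cube $A$ of order $n$ there is a quadruple $\sigma=(\tau_1,\tau_2,\tau_3,\tau_4)$ of permutations of $[n]$ (acting on the row layers, column layers, file layers and symbols, respectively) such that the Latin cube $L$ obtained by applying $\sigma$ to the Boolean Latin cube $B$ of order $n$ satisfies: (a) no row of $L$ contains more than $\kappa n$ conflicts with $A$; (b) no column of $L$ contains more than $\kappa n$ conflicts with $A$; (c) no file of $L$ contains more than $\kappa n$ conflicts with $A$; (d) no symbol-set of $L$ contains more than $\kappa n$ conflicts with $A$; (e) no transversal-set of $L$ contains more than $\kappa n$ conflicts with $A$; (f) each cell of $L$ belongs to at least $\alpha n$ allowed $3$-cubes of $L$.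
   Context: Cells of a cube of order $n$ are triples $(i,j,k)\in[n]^3$. A row is $\{(i,j^*,k):j^*\in[n]\}$, a column $\{(i^*,j,k):i^*\in[n]\}$, a file $\{(i,j,k^* ):k^*\in[n]\}$. Row layer $i$ is $\{(i,j^*,k^* )\}$, column layer $j$ is $\{(i^*,j,k^* )\}$, file layer $k$ is $\{(i^*,j^*,k)\}$. An $(m,m,m,m)$-cube of order $n$ is a cube $A$ with $A(i,j,k)\subseteq[n]$ for each cell, each cell containing at most $m$ symbols and each symbol occurring at most $m$ times in each row, each column and each file. A Latin cube $L$ of order $n$ has one symbol $L(i,j,k)\in[n]$ in each cell with each symbol exactly once in every row, column and file. Let $a_x$ be the $x$-th smallest element of $\mathbb{Z}_2^t$ (in the natural order of binary strings), $x=1,\dots,2^t$. The Boolean Latin cube $B$ of order $n=2^t$ has $B(i,j,k)=x$ where $a_x=a_i+a_j+a_k$ in $\mathbb{Z}_2^t$. Applying $\sigma=(\tau_1,\tau_2,\tau_3,\tau_4)$ to $B$ gives $L$ with $L(\tau_1(i),\tau_2(j),\tau_3(k))=\tau_4(B(i,j,k))$. A conflict of $L$ with $A$ is a cell with $L(i,j,k)\in A(i,j,k)$. A symbol-set of $L$ is the set of all cells in a given row layer, column layer or file layer of $L$ that contain a given symbol. A $3$-cube in $L$ is a set of eight cells $\{(i_a,j_b,k_c): a,b,c\in\{1,2\}\}$ with $i_1\ne i_2$, $j_1\neq j_2$, $k_1\ne k_2$, such that $L(i_1,j_1,k_1)=L(i_2,j_2,k_1)=L(i_1,j_2,k_2)=L(i_2,j_1,k_2)=x_1$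 and $L(i_1,j_2,k_1)=L(i_2,j_1,k_1)=L(i_1,j_1,k_2)=L(i_2,j_2,k_2)=x_2$. A swap on this $3$-cube replaces $x_1$ by $x_2$ and $x_2$ by $x_1$ in these eight cells (leaving all other cells unchanged), producing another Latin cube. A $3$-cube is allowed if after swapping on it none of its eight cells is a conflict. A transversal-set of $L$ is a set of $n$ cells no two in the same row, column or file, no two containing the same symbol, and such that any two of its cells lie in a unique common $3$-cube. Following the paper's convention, floors/ceilings are omitted, so quantities like $\gamma n$, $\kappa n$, $(1-\alpha-2\gamma)n/3$ are treated as integers. *)

(* Defs.v *)
From Stdlib Require PeanoNat.
From mathcomp Require Import all_boot all_order all_algebra all_fingroup.
Set Implicit Arguments. Unset Strict Implicit. Unset Printing Implicit Defensive.
Import Order.TTheory GRing.Theory Num.Theory.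

(* Symbols, row/column/file indices: [n] is represented by 'I_n
   (index x-1 in 'I_n stands for x in [n]). *)
Definition cell (n : nat) := ('I_n * 'I_n * 'I_n)%type.

Definition mcube (n : nat) := 'I_n -> 'I_n -> 'I_n -> {set 'I_n}.
Definition lcube (n : nat) := 'I_n -> 'I_n -> 'I_n -> 'I_n.

Definition is_mcube n (m : nat) (A : mcube n) : Prop :=
  (forall i j k, #|A i j k| <= m) /\
  (forall i k s, #|[set j | s \in A i j k]| <= m) /\
  (forall j k s, #|[set i | s \in A i j k]| <= m) /\
  (forall i j s, #|[set k | s \in A i j k]| <= m).

Definition is_latin n (L : lcube n) : Prop :=
  (forall i k s, exists! j, L i j k = s) /\
  (forall j k s, exists! i, L i j k = s) /\
  (forall i j s, exists! k, L i j k = s).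

(* Boolean Latin cube of order 2^t: index x (0-based) corresponds to the
   element of Z_2^t whose binary string is the binary expansion of x (this is
   the (x+1)-th smallest binary string), and addition in Z_2^t is bitwise xor. *)
Definition boolB (t : nat) : lcube (2 ^ t) :=
  fun i j k => insubd i (PeanoNat.Nat.lxor (PeanoNat.Nat.lxor i j) k).

(* Applying sigma = (t1,t2,t3,t4): L(t1 i, t2 j, t3 k) = t4 (B i j k). *)
Definition apply_sigma n (B : lcube n) (t1 t2 t3 t4 : {perm 'I_n}) : lcube n :=
  fun i j k => t4 (B ((t1^-1)%g i) ((t2^-1)%g j) ((t3^-1)%g k)).

Definition Lc n (L : lcube n) (c : cell n) : 'I_n := L c.1.1 c.1.2 c.2.

Definition conflict n (L : lcube n) (A : mcube n) (c : cell n) : bool :=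
  Lc L c \in A c.1.1 c.1.2 c.2.

Definition row_set n (i k : 'I_n) : {set cell n} :=
  [set c : cell n | (c.1.1 == i) && (c.2 == k)].
Definition col_set n (j k : 'I_n) : {set cell n} :=
  [set c : cell n | (c.1.2 == j) && (c.2 == k)].
Definition file_set n (i j : 'I_n) : {set cell n} :=
  [set c : cell n | (c.1.1 == i) && (c.1.2 == j)].

Definition rowlayer_symset n (L : lcube n) (i s : 'I_n) : {set cell n} :=
  [set c : cell n | (c.1.1 == i) && (Lc L c == s)].
Definition collayer_symset n (L : lcube n) (j s : 'I_n) : {set cell n} :=
  [set c : cell n | (c.1.2 == j) && (Lc L c == s)].
Definition filelayer_symset n (L : lcube n) (k s : 'I_n) : {set cell n} :=
  [set c : cell n | (c.2 == k) && (Lc L c == s)].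

Definition nconf n (L : lcube n) (A : mcube n) (S : {set cell n}) : nat :=
  #|[set c in S | conflict L A c]|.

Definition cube8 n (i1 i2 j1 j2 k1 k2 : 'I_n) : {set cell n} :=
  [set c : cell n | [&& (c.1.1 == i1) || (c.1.1 == i2),
                        (c.1.2 == j1) || (c.1.2 == j2) &
                        (c.2 == k1) || (c.2 == k2)]].

Definition cube_pattern n (L : lcube n) (i1 i2 j1 j2 k1 k2 x1 x2 : 'I_n) : bool :=
  [&& i1 != i2, j1 != j2, k1 != k2,
      [&& L i1 j1 k1 == x1, L i2 j2 k1 == x1, L i1 j2 k2 == x1 & L i2 j1 k2 == x1] &
      [&& L i1 j2 k1 == x2, L i2 j1 k1 == x2, L i1 j1 k2 == x2 & L i2 j2 k2 == x2]].

Definition is_3cube n (L : lcube n) (C : {set cell n}) : bool :=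
  [exists i1, exists i2, exists j1, exists j2, exists k1, exists k2,
   exists x1, exists x2,
    cube_pattern L i1 i2 j1 j2 k1 k2 x1 x2 && (C == cube8 i1 i2 j1 j2 k1 k2)].

(* C is an allowed 3-cube: after the swap (x1 <-> x2 on the eight cells),
   none of the eight cells is a conflict with A. *)
Definition allowed_3cube n (L : lcube n) (A : mcube n) (C : {set cell n}) : bool :=
  [exists i1, exists i2, exists j1, exists j2, exists k1, exists k2,
   exists x1, exists x2,
    [&& cube_pattern L i1 i2 j1 j2 k1 k2 x1 x2,
        C == cube8 i1 i2 j1 j2 k1 k2 &
        [forall c in C,
          (if Lc L c == x1 then x2 else x1) \notin A c.1.1 c.1.2 c.2]]].

Definition is_transversal_set n (L : lcube n) (T : {set cell n}) : Prop :=
  [/\ #|T| = n,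
      forall c d, c \in T -> d \in T -> c != d ->
        [/\ ~ (c.1.1 = d.1.1 /\ c.2 = d.2),
            ~ (c.1.2 = d.1.2 /\ c.2 = d.2),
            ~ (c.1.1 = d.1.1 /\ c.1.2 = d.1.2)
          & Lc L c <> Lc L d] &
      forall c d, c \in T -> d \in T -> c != d ->
        exists! C : {set cell n}, [/\ is_3cube L C, c \in C & d \in C]].

(* Main.v *)
From Stdlib Require Import PeanoNat.
Require Import Defs.
From mathcomp Require Import all_boot all_order all_algebra all_fingroup.
From mathcomp Require Import zify ring lra.
Set Implicit Arguments. Unset Strict Implicit. Unset Printing Implicit Defensive.

Lemma card_bigcup_le (T J : finType) (D : {pred J}) (F : J -> {set T}) :
  #|\bigcup_(j in D) F j| <= \sum_(j in D) #|F j|.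
Proof.
elim/big_rec2: _ => [|j U s _ IH]; first by rewrite cards0.
exact: leq_trans (leq_card_setU _ _).1 (leq_add (leqnn _) IH).
Qed.

Lemma exists_sub_card (T : finType) (P : {set T}) r :
  r <= #|P| -> exists2 X : {set T}, X \subset P & #|X| = r.
Proof.
elim: r => [|r IH] H; first by exists set0; rewrite ?sub0set ?cards0.
have [X XP cX] := IH (ltnW H).
have : ~~ (P \subset X).
  apply/negP => PX; have := subset_leq_card PX; rewrite cX; lia.
case/subsetPn => x xP xX.
exists (x |: X); first by rewrite subUset sub1set xP XP.
by rewrite cardsU1 xX cX.
Qed.

Lemma fix_count n (I : finType) (pos : I -> 'I_n) (Y : {set I}) (y : I -> 'I_n) :
  {in Y &, injective pos} ->
  #|[set s : {perm 'I_n} | [forall i in Y, s (pos i) == y i]]| <= (n - #|Y|)`!.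
Proof.
move=> injp.
set A := [set s : {perm 'I_n} | _].
have [->|[s0 Hs0]] := set_0Vmem A; first by rewrite cards0.
have Hy : forall i, i \in Y -> s0 (pos i) = y i.
  by move=> i iY; move: Hs0; rewrite inE => /forallP /(_ i); rewrite iY => /eqP.
pose W := [set y i | i in Y].
have cW : #|W| = #|Y|.
  rewrite card_in_imset // => i j iY jY; rewrite -!Hy // => /perm_inj; exact: injp.
have sub : [set (s0^-1 * s)%g | s in A] \subset perm_on (~: W).
  apply/subsetP => p /imsetP [s sA ->]; apply/subsetP => x; rewrite !inE.
  apply: contraR; rewrite negbK => /imsetP [i iY ->].
  rewrite permM -Hy // permK; apply/eqP.
  by move: sA; rewrite inE => /forallP /(_ i); rewrite iY Hy // => /eqP.
have := subset_leq_card sub.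
rewrite card_imset; last by apply: mulgI.
rewrite card_perm => /leq_trans; apply.
by rewrite cardsCs setCK card_ord cW.
Qed.

Lemma constr_count n G (I : finType) (pos : I -> 'I_n) (S : I -> {set 'I_n}) :
  injective pos -> (forall i, #|S i| <= G) ->
  forall r (X Y : {set I}) (y : I -> 'I_n), #|X| = r -> [disjoint X & Y] ->
  #|[set s : {perm 'I_n} | [forall i in Y, s (pos i) == y i]
                          && [forall i in X, s (pos i) \in S i]]|
    <= G ^ r * (n - #|Y| - r)`!.
Proof.
move=> injp hS; elim=> [|r IH] X Y y cX dXY.
  have -> : X = set0 by apply/eqP; rewrite -cards_eq0 cX.
  rewrite expn0 mul1n subn0.
  apply: leq_trans (fix_count y (in2W injp)).
  apply: subset_leq_card; apply/subsetP => s; rewrite !inE.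
  by case/andP.
have : 0 < #|X| by rewrite cX.
case/card_gt0P => x xX.
pose A := [set s : {perm 'I_n} | [forall i in Y, s (pos i) == y i]
                          && [forall i in X, s (pos i) \in S i]].
pose y' (z : 'I_n) i := if i == x then z else y i.
pose B z := [set s : {perm 'I_n} | [forall i in x |: Y, s (pos i) == y' z i]
                          && [forall i in X :\ x, s (pos i) \in S i]].
have xY : x \notin Y.
  by apply: contraL dXY => xY; apply/pred0Pn; exists x; rewrite /= xX xY.
have sub : A \subset \bigcup_(z in S x) B z.
  apply/subsetP => s; rewrite !inE => /andP [/forallP HY /forallP HX].
  apply/bigcupP; exists (s (pos x)); first by have := HX x; rewrite xX.
  rewrite inE; apply/andP; split; apply/forallP => i.
    apply/implyP; rewrite !inE /y'; case: eqP => [->|_] //=.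
    by move=> iY; exact: (implyP (HY i) iY).
  apply/implyP; rewrite !inE => /andP [_ iX]; exact: (implyP (HX i) iX).
apply: leq_trans (subset_leq_card sub) _.
apply: leq_trans (card_bigcup_le _ _) _.
have cX' : #|X :\ x| = r by move: cX; rewrite (cardsD1 x) xX; case.
have dis' : [disjoint X :\ x & x |: Y].
  rewrite -setI_eq0; apply/eqP/setP => i; rewrite !inE.
  case: (i =P x) => //= _; apply/negP => /andP [iX iY].
  by move: dXY; rewrite -setI_eq0 => /eqP /setP /(_ i); rewrite !inE iX iY.
apply: (@leq_trans (\sum_(z in S x) (G ^ r * (n - #|x |: Y| - r)`!))).
  by apply: leq_sum => z _; exact: IH.
rewrite sum_nat_const cardsU1 xY.
have e : n - (1 + #|Y|) - r = n - #|Y| - r.+1 by lia.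
rewrite e expnS mulnA leq_mul2r; apply/orP; right.
by rewrite leq_mul2r hS orbT.
Qed.

Lemma perm_tail n G (I : finType) (pos : I -> 'I_n) (S : I -> {set 'I_n}) r :
  injective pos -> (forall i, #|S i| <= G) ->
  #|[set s : {perm 'I_n} | r <= #|[set i | s (pos i) \in S i]|]| * r`!
    <= G ^ r * n`!.
Proof.
move=> injp hS.
set A := [set s | _].
have sub : A \subset \bigcup_(X in [set X : {set I} | #|X| == r])
    [set s : {perm 'I_n} | [forall i in set0, s (pos i) == pos i]
                          && [forall i in X, s (pos i) \in S i]].
  apply/subsetP => s; rewrite inE => /exists_sub_card [X XP cX].
  apply/bigcupP; exists X; first by rewrite inE cX.
  rewrite inE; apply/andP; split; apply/forallP => i; rewrite ?inE //.
  apply/implyP => iX; have := subsetP XP i iX; by rewrite inE.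
have cI : #|I| <= n by rewrite -(card_ord n); apply: (leq_card _ injp).
have H1 : #|A| <= 'C(#|I|, r) * (G ^ r * (n - r)`!).
  apply: leq_trans (subset_leq_card sub) _.
  apply: leq_trans (card_bigcup_le _ _) _.
  apply: (@leq_trans (\sum_(X in [set X : {set I} | #|X| == r]) (G ^ r * (n - #|@set0 I| - r)`!))).
    apply: leq_sum => X; rewrite inE => /eqP cX.
    apply: (constr_count injp hS (Y:=set0) pos cX).
    by rewrite -setI_eq0 setI0.
  rewrite sum_nat_const -card_draws cards0 subn0.
  by rewrite leq_mul2r leqnn orbT.
case: (leqP r n) => rn.
  apply: leq_trans (leq_mul H1 (leqnn _)) _.
  have hb := leq_bin2l r cI.
  have hf := bin_fact rn.
  set a := 'C(#|I|, r) in hb *; set b := 'C(n, r) in hb hf *.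
  set u := r`! in hf *; set v := (n - r)`! in hf *; set w := G ^ r.
  rewrite -hf.
  rewrite (mulnC a) -!mulnA leq_mul2l; apply/orP; right.
  rewrite (mulnC u v) (mulnC a u) mulnA (mulnC b) leq_mul2l; apply/orP; right.
  done.
rewrite (bin_small (leq_trans _ rn)) ?ltnS // mul0n in H1.
by move: H1; rewrite leqn0 => /eqP ->.
Qed.

Definition PT n := {perm 'I_n}.

Definition S4 n (F : PT n -> PT n -> PT n -> PT n -> nat) :=
  \sum_(a : PT n) \sum_(b : PT n) \sum_(c : PT n) \sum_(d : PT n) F a b c d.

Lemma S4_le n (F G : PT n -> PT n -> PT n -> PT n -> nat) :
  (forall a b c d, F a b c d <= G a b c d) -> S4 F <= S4 G.
Proof.
move=> H; rewrite /S4; do 4 (apply: leq_sum => ? _); exact: H.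
Qed.

Lemma S4_add n (F G : PT n -> PT n -> PT n -> PT n -> nat) :
  S4 (fun a b c d => F a b c d + G a b c d) = S4 F + S4 G.
Proof.
rewrite /S4 -big_split; apply: eq_bigr => a _.
rewrite -big_split; apply: eq_bigr => b _.
rewrite -big_split; apply: eq_bigr => c _.
by rewrite -big_split.
Qed.

Lemma S4_sum n (J : finType) (F : J -> PT n -> PT n -> PT n -> PT n -> nat) :
  S4 (fun a b c d => \sum_(e : J) F e a b c d) = \sum_(e : J) S4 (F e).
Proof.
rewrite /S4.
transitivity (\sum_(a : PT n) \sum_(b : PT n) \sum_(c : PT n) \sum_(e : J) \sum_(d : PT n) F e a b c d).
  apply: eq_bigr => a _; apply: eq_bigr => b _; apply: eq_bigr => c _; exact: exchange_big.
transitivity (\sum_(a : PT n) \sum_(b : PT n) \sum_(e : J) \sum_(c : PT n) \sum_(d : PT n) F e a b c d).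
  apply: eq_bigr => a _; apply: eq_bigr => b _; exact: exchange_big.
transitivity (\sum_(a : PT n) \sum_(e : J) \sum_(b : PT n) \sum_(c : PT n) \sum_(d : PT n) F e a b c d).
  apply: eq_bigr => a _; exact: exchange_big.
exact: exchange_big.
Qed.

Lemma cardPT n : #|PT n| = n`!.
Proof.
have := card_perm [set: 'I_n]; rewrite cardsT card_ord => <-.
apply: eq_card => s.
transitivity true; first by [].
by symmetry; apply/subsetP => x _; rewrite in_setT.
Qed.

Lemma S4_1 n : S4 (fun _ _ _ _ : PT n => 1) = n`! ^ 4.
Proof.
rewrite /S4 !sum_nat_const !cardPT.
by rewrite !muln1 /= expnS !mulnA mulnC !mulnA.
Qed.

Lemma sum_bool_card (T : finType) (P : pred T) :
  \sum_(x : T) (P x : nat) = #|[set x | P x]|.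
Proof.
rewrite (eq_bigr (fun x => if P x then 1 else 0)); last by move=> x _; case: (P x).
by rewrite -big_mkcond sum1_card cardsE.
Qed.

Lemma rand4 n (E : PT n -> PT n -> PT n -> PT n -> bool) w K :
  (forall a b c, #|[set d | E a b c d]| * w <= K) ->
  S4 (fun a b c d => (E a b c d : nat)) * w <= K * n`! ^ 3.
Proof.
move=> H; rewrite /S4.
have cP := cardPT n.
apply: (@leq_trans (\sum_(a : PT n) \sum_(b : PT n) \sum_(c : PT n) K)).
  rewrite big_distrl; apply: leq_sum => a _.
  rewrite big_distrl; apply: leq_sum => b _.
  rewrite big_distrl; apply: leq_sum => c _.
  by rewrite sum_bool_card.
rewrite !sum_nat_const cP.
by rewrite expnS expnS expn1 !mulnA mulnC !mulnA.
Qed.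

Lemma rand1 n (E : PT n -> PT n -> PT n -> PT n -> bool) w K :
  (forall b c d, #|[set a | E a b c d]| * w <= K) ->
  S4 (fun a b c d => (E a b c d : nat)) * w <= K * n`! ^ 3.
Proof.
move=> H.
have -> : S4 (fun a b c d => (E a b c d : nat)) =
          S4 (fun b c d a => (E a b c d : nat)).
  rewrite /S4 exchange_big; apply: eq_bigr => b _.
  rewrite exchange_big; apply: eq_bigr => c _.
  by rewrite exchange_big.
exact: rand4.
Qed.

Lemma rand2 n (E : PT n -> PT n -> PT n -> PT n -> bool) w K :
  (forall a c d, #|[set b | E a b c d]| * w <= K) ->
  S4 (fun a b c d => (E a b c d : nat)) * w <= K * n`! ^ 3.
Proof.
move=> H.
have -> : S4 (fun a b c d => (E a b c d : nat)) =
          S4 (fun a c d b => (E a b c d : nat)).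
  rewrite /S4; apply: eq_bigr => a _.
  rewrite exchange_big; apply: eq_bigr => c _.
  by rewrite exchange_big.
exact: rand4.
Qed.

Lemma rand3 n (E : PT n -> PT n -> PT n -> PT n -> bool) w K :
  (forall a b d, #|[set c | E a b c d]| * w <= K) ->
  S4 (fun a b c d => (E a b c d : nat)) * w <= K * n`! ^ 3.
Proof.
move=> H.
have -> : S4 (fun a b c d => (E a b c d : nat)) =
          S4 (fun a b d c => (E a b c d : nat)).
  rewrite /S4; apply: eq_bigr => a _; apply: eq_bigr => b _.
  by rewrite exchange_big.
exact: rand4.
Qed.

Lemma expn_pow (a b : nat) : (a ^ b)%N = Nat.pow a b.
Proof. elim: b => [|b IH] //=; by rewrite expnS IH. Qed.

Lemma lxor_lt t (a b : nat) : (a < 2 ^ t)%N -> (b < 2 ^ t)%N -> (Nat.lxor a b < 2 ^ t)%N.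
Proof.
rewrite expn_pow => /ltP ha /ltP hb; apply/ltP.
have hp : Nat.pow 2 t <> 0 by apply: Nat.pow_nonzero.
have ea := Nat.mod_small _ _ ha; have eb := Nat.mod_small _ _ hb.
suff <- : Nat.modulo (Nat.lxor a b) (Nat.pow 2 t) = Nat.lxor a b by apply: Nat.mod_upper_bound.
apply: Nat.bits_inj => i.
case: (Nat.lt_ge_cases i t) => hi.
  by rewrite Nat.mod_pow2_bits_low.
rewrite Nat.mod_pow2_bits_high // Nat.lxor_spec -ea -eb !Nat.mod_pow2_bits_high //.
Qed.

Definition xo t (a b : 'I_(2 ^ t)) : 'I_(2 ^ t) := insubd a (Nat.lxor a b).

Lemma val_xo t (a b : 'I_(2 ^ t)) : val (xo a b) = Nat.lxor a b.
Proof. by rewrite /xo insubdK //; apply: lxor_lt. Qed.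

Definition z0 t : 'I_(2 ^ t) := Ordinal (expn_gt0 2 t).

Lemma val_z0 t : val (z0 t) = 0. Proof. by []. Qed.

Ltac bits_solve :=
  apply: val_inj => /=; rewrite ?val_xo ?val_z0;
  apply: Nat.bits_inj => ?; rewrite ?Nat.lxor_spec ?Nat.bits_0;
  repeat match goal with |- context [Nat.testbit ?x ?i] => destruct (Nat.testbit x i) end;
  reflexivity.

Lemma xoA t (a b c : 'I_(2 ^ t)) : xo (xo a b) c = xo a (xo b c).
Proof. bits_solve. Qed.
Lemma xoC t (a b : 'I_(2 ^ t)) : xo a b = xo b a.
Proof. bits_solve. Qed.
Lemma xoo t (a : 'I_(2 ^ t)) : xo a a = z0 t.
Proof. bits_solve. Qed.
Lemma xo0 t (a : 'I_(2 ^ t)) : xo a (z0 t) = a.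
Proof. bits_solve. Qed.
Lemma xoK t (a b : 'I_(2 ^ t)) : xo (xo a b) b = a.
Proof. bits_solve. Qed.
Lemma xo_injr t (a : 'I_(2 ^ t)) : injective (xo a).
Proof. move=> b c e; by rewrite -(xoK b a) -(xoK c a) !(xoC _ a) e. Qed.
Lemma xo_injl t (a : 'I_(2 ^ t)) : injective (fun b : 'I_(2 ^ t) => xo b a).
Proof. move=> b c /= e; by rewrite -(xoK b a) -(xoK c a) e. Qed.
Lemma xo_eq0 t (a b : 'I_(2 ^ t)) : (xo a b == z0 t) = (a == b).
Proof.
apply/eqP/eqP => [e|->]; last exact: xoo.
by rewrite -(xoK a b) e xoC xo0.
Qed.

Lemma boolBE t (i j k : 'I_(2 ^ t)) : boolB i j k = xo (xo i j) k.
Proof.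
apply: val_inj; rewrite val_xo /boolB insubdK ?val_xo //.
by apply: lxor_lt => //; apply: lxor_lt.
Qed.

Lemma LE t (t1 t2 t3 t4 : {perm 'I_(2 ^ t)}) i j k :
  apply_sigma (@boolB t) t1 t2 t3 t4 i j k =
  t4 (xo (xo ((t1^-1)%g i) ((t2^-1)%g j)) ((t3^-1)%g k)).
Proof. by rewrite /apply_sigma boolBE. Qed.

Lemma LEt t (t1 t2 t3 t4 : {perm 'I_(2 ^ t)}) i j k :
  apply_sigma (@boolB t) t1 t2 t3 t4 (t1 i) (t2 j) (t3 k) = t4 (xo (xo i j) k).
Proof. by rewrite LE !permK. Qed.

Definition ev n (I : finType) r (s : {perm 'I_n}) (pos : I -> 'I_n) (S : I -> {set 'I_n}) : bool :=
  r <= #|[set i | s (pos i) \in S i]|.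

Lemma ev_bound n G (I : finType) r (pos : I -> 'I_n) (S : I -> {set 'I_n}) :
  injective pos -> (forall i, #|S i| <= G) ->
  #|[set s | ev r s pos S]| * r`! <= G ^ r * n`!.
Proof. exact: perm_tail. Qed.


Definition II t := 'I_(2 ^ t).

Definition E1 t (A : mcube (2 ^ t)) r (e : II t * II t) (t1 t2 t3 t4 : PT (2 ^ t)) :=
  ev r t4 (fun j => xo (xo e.1 j) e.2) (fun j => A (t1 e.1) (t2 j) (t3 e.2)).
Definition E2 t (A : mcube (2 ^ t)) r (e : II t * II t) (t1 t2 t3 t4 : PT (2 ^ t)) :=
  ev r t4 (fun i => xo (xo i e.1) e.2) (fun i => A (t1 i) (t2 e.1) (t3 e.2)).
Definition E3 t (A : mcube (2 ^ t)) r (e : II t * II t) (t1 t2 t3 t4 : PT (2 ^ t)) :=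
  ev r t4 (fun kk => xo (xo e.1 e.2) kk) (fun kk => A (t1 e.1) (t2 e.2) (t3 kk)).
Definition E4 t (A : mcube (2 ^ t)) r (e : II t * II t) (t1 t2 t3 t4 : PT (2 ^ t)) :=
  ev r t2 (fun kk => xo (xo e.1 e.2) kk) (fun kk => [set j | t4 e.2 \in A (t1 e.1) j (t3 kk)]).
Definition E5 t (A : mcube (2 ^ t)) r (e : II t * II t) (t1 t2 t3 t4 : PT (2 ^ t)) :=
  ev r t1 (fun kk => xo (xo e.1 e.2) kk) (fun kk => [set i | t4 e.2 \in A i (t2 e.1) (t3 kk)]).
Definition E6 t (A : mcube (2 ^ t)) r (e : II t * II t) (t1 t2 t3 t4 : PT (2 ^ t)) :=
  ev r t1 (fun j => xo (xo j e.2) e.1) (fun j => [set i | t4 e.2 \in A i (t2 j) (t3 e.1)]).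
Definition E7 t (A : mcube (2 ^ t)) r (e : II t * II t) (t1 t2 t3 t4 : PT (2 ^ t)) :=
  ev r t4 (fun x => xo (xo x e.1) e.2) (fun x => A (t1 x) (t2 (xo x e.1)) (t3 (xo x e.2))).

Definition bB t (c : II t * II t * II t) := xo (xo c.1.1 c.1.2) c.2.

Definition F1 t (A : mcube (2 ^ t)) r (c : II t * II t * II t) (t1 t2 t3 t4 : PT (2 ^ t)) :=
  ev r t1 (fun d => xo c.1.1 d) (fun d => if d == z0 t then set0 else
     [set i | t4 (xo (bB c) d) \in A i (t2 (xo c.1.2 d)) (t3 c.2)] :|:
     [set i | t4 (bB c) \in A i (t2 c.1.2) (t3 c.2)]).
Definition F2 t (A : mcube (2 ^ t)) r (c : II t * II t * II t) (t1 t2 t3 t4 : PT (2 ^ t)) :=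
  ev r t2 (fun d => xo c.1.2 d) (fun d => if d == z0 t then set0 else
     [set j | t4 (xo (bB c) d) \in A (t1 c.1.1) j (t3 (xo c.2 d))] :|:
     [set j | t4 (bB c) \in A (t1 (xo c.1.1 d)) j (t3 (xo c.2 d))]).
Definition F3 t (A : mcube (2 ^ t)) r (c : II t * II t * II t) (t1 t2 t3 t4 : PT (2 ^ t)) :=
  ev r t3 (fun d => xo c.2 d) (fun d => if d == z0 t then set0 else
     [set kk | t4 (xo (bB c) d) \in A (t1 (xo c.1.1 d)) (t2 c.1.2) kk] :|:
     [set kk | t4 (bB c) \in A (t1 c.1.1) (t2 c.1.2) kk]).

Lemma card_setU_le (T : finType) (X Y : {set T}) g :
  #|X| <= g -> #|Y| <= g -> #|X :|: Y| <= g + g.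
Proof. move=> hx hy; apply: leq_trans (leq_card_setU _ _).1 _; exact: leq_add. Qed.

Lemma Sif_le t g (d : II t) (X Y : {set II t}) :
  #|X| <= g -> #|Y| <= g -> #|if d == z0 t then set0 else X :|: Y| <= 2 * g.
Proof.
move=> hx hy; case: (d == z0 t); first by rewrite cards0.
rewrite mul2n -addnn; exact: card_setU_le.
Qed.

Ltac inj_solve := move=> ? ? /=; first [move/xo_injr | move/xo_injl]; first [done | move/xo_injr | move/xo_injl]; done.

Lemma boundE t (A : mcube (2 ^ t)) g r e : is_mcube g A ->
  [/\ S4 (fun a b c d => (E1 A r e a b c d : nat)) * r`! <= g ^ r * (2 ^ t)`! ^ 4,
      S4 (fun a b c d => (E2 A r e a b c d : nat)) * r`! <= g ^ r * (2 ^ t)`! ^ 4,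
      S4 (fun a b c d => (E3 A r e a b c d : nat)) * r`! <= g ^ r * (2 ^ t)`! ^ 4,
      S4 (fun a b c d => (E4 A r e a b c d : nat)) * r`! <= g ^ r * (2 ^ t)`! ^ 4 &
   [/\ S4 (fun a b c d => (E5 A r e a b c d : nat)) * r`! <= g ^ r * (2 ^ t)`! ^ 4,
      S4 (fun a b c d => (E6 A r e a b c d : nat)) * r`! <= g ^ r * (2 ^ t)`! ^ 4 &
      S4 (fun a b c d => (E7 A r e a b c d : nat)) * r`! <= g ^ r * (2 ^ t)`! ^ 4]].
Proof.
move=> [h0 [h1 [h2 h3]]].
have ex : forall K, K * (2 ^ t)`! * (2 ^ t)`! ^ 3 = K * (2 ^ t)`! ^ 4.
  by move=> K; rewrite -mulnA -expnS.
split; last split; rewrite -ex.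
- apply: rand4 => a b c; apply: ev_bound; [inj_solve | move=> ?; exact: h0].
- apply: rand4 => a b c; apply: ev_bound; [inj_solve | move=> ?; exact: h0].
- apply: rand4 => a b c; apply: ev_bound; [inj_solve | move=> ?; exact: h0].
- apply: rand2 => a c d; apply: ev_bound; [inj_solve | move=> ?; exact: h1].
- apply: rand1 => b c d; apply: ev_bound; [inj_solve | move=> ?; exact: h2].
- apply: rand1 => b c d; apply: ev_bound; [inj_solve | move=> ?; exact: h2].
- apply: rand4 => a b c; apply: ev_bound; [inj_solve | move=> ?; exact: h0].
Qed.

Lemma boundF t (A : mcube (2 ^ t)) g r c : is_mcube g A ->
  [/\ S4 (fun a b c' d => (F1 A r c a b c' d : nat)) * r`! <= (2 * g) ^ r * (2 ^ t)`! ^ 4,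
      S4 (fun a b c' d => (F2 A r c a b c' d : nat)) * r`! <= (2 * g) ^ r * (2 ^ t)`! ^ 4 &
      S4 (fun a b c' d => (F3 A r c a b c' d : nat)) * r`! <= (2 * g) ^ r * (2 ^ t)`! ^ 4].
Proof.
move=> [h0 [h1 [h2 h3]]].
have ex : forall K, K * (2 ^ t)`! * (2 ^ t)`! ^ 3 = K * (2 ^ t)`! ^ 4.
  by move=> K; rewrite -mulnA -expnS.
split; rewrite -ex.
- apply: rand1 => b c' d; apply: ev_bound; [inj_solve | move=> ?; apply: Sif_le; exact: h2].
- apply: rand2 => a c' d; apply: ev_bound; [inj_solve | move=> ?; apply: Sif_le; exact: h1].
- apply: rand3 => a b d; apply: ev_bound; [inj_solve | move=> ?; apply: Sif_le; exact: h3].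
Qed.

Definition EE t (A : mcube (2 ^ t)) r e (t1 t2 t3 t4 : PT (2 ^ t)) :=
  [|| E1 A r e t1 t2 t3 t4, E2 A r e t1 t2 t3 t4, E3 A r e t1 t2 t3 t4,
      E4 A r e t1 t2 t3 t4, E5 A r e t1 t2 t3 t4, E6 A r e t1 t2 t3 t4 |
      E7 A r e t1 t2 t3 t4].
Definition FF t (A : mcube (2 ^ t)) r c (t1 t2 t3 t4 : PT (2 ^ t)) :=
  [|| F1 A r c t1 t2 t3 t4, F2 A r c t1 t2 t3 t4 | F3 A r c t1 t2 t3 t4].

Lemma orb_le7 (a b c d e f g : bool) :
  ([|| a, b, c, d, e, f | g] : nat) <= a + b + c + d + e + f + g.
Proof. by case: a; case: b; case: c; case: d; case: e; case: f; case: g. Qed.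
Lemma orb_le3 (a b c : bool) : ([|| a, b | c] : nat) <= a + b + c.
Proof. by case: a; case: b; case: c. Qed.

Lemma exists_le_sum (T : finType) (P : pred T) :
  ([exists x, P x] : nat) <= \sum_x (P x : nat).
Proof.
case: existsP => [[x Px]|_] //.
by rewrite (bigD1 x) //= Px.
Qed.

Lemma boundEE t (A : mcube (2 ^ t)) g r e : is_mcube g A ->
  S4 (fun a b c d => (EE A r e a b c d : nat)) * r`! <= 7 * (g ^ r * (2 ^ t)`! ^ 4).
Proof.
move=> hA; have [b1 b2 b3 b4 [b5 b6 b7]] := boundE r e hA.
apply: (@leq_trans (S4 (fun a b c d => E1 A r e a b c d + E2 A r e a b c d + E3 A r e a b c d
   + E4 A r e a b c d + E5 A r e a b c d + E6 A r e a b c d + E7 A r e a b c d) * r`!)).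
  by rewrite leq_mul2r; apply/orP; right; apply: S4_le => a b c d; exact: orb_le7.
rewrite !S4_add !mulnDl.
lia.
Qed.

Lemma boundFF t (A : mcube (2 ^ t)) g r c : is_mcube g A ->
  S4 (fun a b c' d => (FF A r c a b c' d : nat)) * r`! <= 3 * ((2 * g) ^ r * (2 ^ t)`! ^ 4).
Proof.
move=> hA; have [b1 b2 b3] := boundF r c hA.
apply: (@leq_trans (S4 (fun a b c' d => F1 A r c a b c' d + F2 A r c a b c' d + F3 A r c a b c' d) * r`!)).
  by rewrite leq_mul2r; apply/orP; right; apply: S4_le => a b c' d; exact: orb_le3.
rewrite !S4_add !mulnDl.
lia.
Qed.

Definition Bad t (A : mcube (2 ^ t)) k m (t1 t2 t3 t4 : PT (2 ^ t)) :=
  [exists e, EE A k e t1 t2 t3 t4] || [exists c, FF A m c t1 t2 t3 t4].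

Lemma bad_sum t (A : mcube (2 ^ t)) g k m : is_mcube g A ->
  exists X Y, [/\ S4 (fun a b c d => (Bad A k m a b c d : nat)) <= X + Y,
     X * k`! <= (2 ^ t) ^ 2 * (7 * (g ^ k * (2 ^ t)`! ^ 4)) &
     Y * m`! <= (2 ^ t) ^ 3 * (3 * ((2 * g) ^ m * (2 ^ t)`! ^ 4))].
Proof.
move=> hA.
exists (\sum_(e : II t * II t) S4 (fun a b c d => (EE A k e a b c d : nat))).
exists (\sum_(c : II t * II t * II t) S4 (fun a b c' d => (FF A m c a b c' d : nat))).
split.
- rewrite -!S4_sum -S4_add; apply: S4_le => a b c d.
  rewrite /Bad.
  apply: (@leq_trans ([exists e, EE A k e a b c d] + [exists c0, FF A m c0 a b c d])).
    by case: [exists e, _]; case: [exists c0, _].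
  apply: leq_add; exact: exists_le_sum.
- rewrite big_distrl /=.
  apply: (@leq_trans (\sum_(e : II t * II t) (7 * (g ^ k * (2 ^ t)`! ^ 4)))).
    by apply: leq_sum => e _; exact: boundEE.
  by rewrite sum_nat_const card_prod !card_ord mulnn.
- rewrite big_distrl /=.
  apply: (@leq_trans (\sum_(c : II t * II t * II t) (3 * ((2 * g) ^ m * (2 ^ t)`! ^ 4)))).
    by apply: leq_sum => c _; exact: boundFF.
  rewrite sum_nat_const !card_prod !card_ord.
  by rewrite (_ : 2 ^ t * 2 ^ t * 2 ^ t = (2 ^ t) ^ 3) // !expnS expn0 muln1 mulnA.
Qed.

Lemma card_inj_le (T U : finType) (X : {set T}) (Y : {set U}) (f : T -> U) :
  {in X &, injective f} -> (forall x, x \in X -> f x \in Y) -> #|X| <= #|Y|.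
Proof.
move=> fi fY; rewrite -(card_in_imset fi); apply: subset_leq_card.
by apply/subsetP => y /imsetP [x xX ->]; exact: fY.
Qed.

Lemma partA t (A : mcube (2 ^ t)) k (t1 t2 t3 t4 : PT (2 ^ t)) l kk :
  ~~ E1 A k ((t1^-1)%g l, (t3^-1)%g kk) t1 t2 t3 t4 ->
  nconf (apply_sigma (@boolB t) t1 t2 t3 t4) A (row_set l kk) <= k.
Proof.
rewrite /E1 /ev -ltnNge /= => H; apply: leq_trans (ltnW H).
apply: (card_inj_le (f := fun c : cell (2 ^ t) => (t2^-1)%g c.1.2)).
  move=> [[ci cj] ck] [[ci' cj'] ck']; rewrite !inE /= => /andP [/andP [/eqP -> /eqP ->] _].
  by move=> /andP [/andP [/eqP -> /eqP ->] _] /perm_inj ->.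
move=> [[ci cj] ck]; rewrite !inE /conflict /Lc /= => /andP [/andP [/eqP -> /eqP ->]].
by rewrite LE !permKV.
Qed.

Lemma partB t (A : mcube (2 ^ t)) k (t1 t2 t3 t4 : PT (2 ^ t)) l kk :
  ~~ E2 A k ((t2^-1)%g l, (t3^-1)%g kk) t1 t2 t3 t4 ->
  nconf (apply_sigma (@boolB t) t1 t2 t3 t4) A (col_set l kk) <= k.
Proof.
rewrite /E2 /ev -ltnNge /= => H; apply: leq_trans (ltnW H).
apply: (card_inj_le (f := fun c : cell (2 ^ t) => (t1^-1)%g c.1.1)).
  move=> [[ci cj] ck] [[ci' cj'] ck']; rewrite !inE /= => /andP [/andP [/eqP -> /eqP ->] _].
  by move=> /andP [/andP [/eqP -> /eqP ->] _] /perm_inj ->.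
move=> [[ci cj] ck]; rewrite !inE /conflict /Lc /= => /andP [/andP [/eqP -> /eqP ->]].
by rewrite LE !permKV.
Qed.

Lemma partC t (A : mcube (2 ^ t)) k (t1 t2 t3 t4 : PT (2 ^ t)) i j :
  ~~ E3 A k ((t1^-1)%g i, (t2^-1)%g j) t1 t2 t3 t4 ->
  nconf (apply_sigma (@boolB t) t1 t2 t3 t4) A (file_set i j) <= k.
Proof.
rewrite /E3 /ev -ltnNge /= => H; apply: leq_trans (ltnW H).
apply: (card_inj_le (f := fun c : cell (2 ^ t) => (t3^-1)%g c.2)).
  move=> [[ci cj] ck] [[ci' cj'] ck']; rewrite !inE /= => /andP [/andP [/eqP -> /eqP ->] _].
  by move=> /andP [/andP [/eqP -> /eqP ->] _] /perm_inj ->.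
move=> [[ci cj] ck]; rewrite !inE /conflict /Lc /= => /andP [/andP [/eqP -> /eqP ->]].
by rewrite LE !permKV.
Qed.

Lemma xs1 t (i j k b : II t) : xo (xo i j) k = b -> j = xo (xo i b) k.
Proof. move=> <-; bits_solve. Qed.
Lemma xs2 t (i j k b : II t) : xo (xo i j) k = b -> i = xo (xo j b) k.
Proof. move=> <-; bits_solve. Qed.

Lemma Lsym t (t1 t2 t3 t4 : PT (2 ^ t)) i j k s :
  apply_sigma (@boolB t) t1 t2 t3 t4 i j k = s ->
  xo (xo ((t1^-1)%g i) ((t2^-1)%g j)) ((t3^-1)%g k) = (t4^-1)%g s.
Proof. by rewrite LE => <-; rewrite permK. Qed.

Lemma partD1 t (A : mcube (2 ^ t)) k (t1 t2 t3 t4 : PT (2 ^ t)) l s :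
  ~~ E4 A k ((t1^-1)%g l, (t4^-1)%g s) t1 t2 t3 t4 ->
  nconf (apply_sigma (@boolB t) t1 t2 t3 t4) A
        (rowlayer_symset (apply_sigma (@boolB t) t1 t2 t3 t4) l s) <= k.
Proof.
rewrite /E4 /ev -ltnNge /= => H; apply: leq_trans (ltnW H).
apply: (card_inj_le (f := fun c : cell (2 ^ t) => (t3^-1)%g c.2)).
  move=> [[ci cj] ck] [[ci' cj'] ck']; rewrite !inE /Lc /= => /andP [/andP [/eqP e1 /eqP e2] _].
  move=> /andP [/andP [/eqP e1' /eqP e2'] _] ek.
  move: e2 e2'; rewrite e1 e1' => /Lsym /xs1 h /Lsym /xs1 h'.
  rewrite ek in h; rewrite -h' in h.
  by rewrite (perm_inj h) (perm_inj ek).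
move=> [[ci cj] ck]; rewrite !inE /conflict /Lc /= => /andP [/andP [/eqP e1 /eqP e2]].
move: (e2); rewrite e1 => /Lsym /xs1 <-; rewrite !permKV -e2 e1 //.
Qed.

Lemma partD2 t (A : mcube (2 ^ t)) k (t1 t2 t3 t4 : PT (2 ^ t)) l s :
  ~~ E5 A k ((t2^-1)%g l, (t4^-1)%g s) t1 t2 t3 t4 ->
  nconf (apply_sigma (@boolB t) t1 t2 t3 t4) A
        (collayer_symset (apply_sigma (@boolB t) t1 t2 t3 t4) l s) <= k.
Proof.
rewrite /E5 /ev -ltnNge /= => H; apply: leq_trans (ltnW H).
apply: (card_inj_le (f := fun c : cell (2 ^ t) => (t3^-1)%g c.2)).
  move=> [[ci cj] ck] [[ci' cj'] ck']; rewrite !inE /Lc /= => /andP [/andP [/eqP e1 /eqP e2] _].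
  move=> /andP [/andP [/eqP e1' /eqP e2'] _] ek.
  move: e2 e2'; rewrite e1 e1' => /Lsym /xs2 h /Lsym /xs2 h'.
  rewrite ek in h; rewrite -h' in h.
  by rewrite (perm_inj h) (perm_inj ek).
move=> [[ci cj] ck]; rewrite !inE /conflict /Lc /= => /andP [/andP [/eqP e1 /eqP e2]].
move: (e2); rewrite e1 => /Lsym /xs2 <-; rewrite !permKV -e2 e1 //.
Qed.

Lemma partD3 t (A : mcube (2 ^ t)) k (t1 t2 t3 t4 : PT (2 ^ t)) l s :
  ~~ E6 A k ((t3^-1)%g l, (t4^-1)%g s) t1 t2 t3 t4 ->
  nconf (apply_sigma (@boolB t) t1 t2 t3 t4) A
        (filelayer_symset (apply_sigma (@boolB t) t1 t2 t3 t4) l s) <= k.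
Proof.
rewrite /E6 /ev -ltnNge /= => H; apply: leq_trans (ltnW H).
apply: (card_inj_le (f := fun c : cell (2 ^ t) => (t2^-1)%g c.1.2)).
  move=> [[ci cj] ck] [[ci' cj'] ck']; rewrite !inE /Lc /= => /andP [/andP [/eqP e1 /eqP e2] _].
  move=> /andP [/andP [/eqP e1' /eqP e2'] _] ek.
  move: e2 e2'; rewrite e1 e1' => /Lsym /xs2 h /Lsym /xs2 h'.
  rewrite ek in h; rewrite -h' in h.
  by rewrite (perm_inj h) (perm_inj ek).
move=> [[ci cj] ck]; rewrite !inE /conflict /Lc /= => /andP [/andP [/eqP e1 /eqP e2]].
move: (e2); rewrite e1 => /Lsym /xs2 <-; rewrite !permKV -e2 e1 //.
Qed.

Lemma xsol t (u u0 d : II t) : xo u u0 = d -> u = xo u0 d.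
Proof. move=> <-; bits_solve. Qed.

Lemma diag_core t (a b c a0 b0 c0 D : II t) :
  (xo a a0 = z0 t \/ xo a a0 = D) -> (xo b b0 = z0 t \/ xo b b0 = D) ->
  (xo c c0 = z0 t \/ xo c c0 = D) ->
  ~ (a = a0 /\ c = c0) -> ~ (b = b0 /\ c = c0) -> ~ (a = a0 /\ b = b0) ->
  xo (xo a b) c <> xo (xo a0 b0) c0 ->
  b = xo a (xo a0 b0) /\ c = xo a (xo a0 c0).
Proof.
by case=> /xsol ->; case=> /xsol ->; case=> /xsol -> h1 h2 h3 h4;
  rewrite ?xo0 in h1 h2 h3 h4 *;
  first [ by case: h1 | by case: h2 | by case: h3
        | by case: h4; bits_solve | by split; bits_solve ].
Qed.

Lemma two_vals t (u v a b : II t) :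
  (u == a) || (u == b) -> (v == a) || (v == b) ->
  xo u v = z0 t \/ xo u v = xo a b.
Proof.
case/orP => /eqP ->; case/orP => /eqP ->; rewrite ?xoo; auto; right; exact: xoC.
Qed.

Lemma xpair1 t (a b c a' b' : II t) : xo (xo a b) c = xo (xo a' b') c -> xo a a' = xo b b'.
Proof. move=> /xs2 ->; bits_solve. Qed.
Lemma xpair2 t (a b c b' c' : II t) : xo (xo a b) c = xo (xo a b') c' -> xo b b' = xo c c'.
Proof. move=> /xs1 ->; bits_solve. Qed.

Lemma permV_eq n (s : PT n) x y : (x == y) = ((s^-1)%g x == (s^-1)%g y).
Proof. by rewrite (inj_eq perm_inj). Qed.

Lemma orV n (s : PT n) x a b : (x == a) || (x == b) ->
  ((s^-1)%g x == (s^-1)%g a) || ((s^-1)%g x == (s^-1)%g b).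
Proof. by rewrite !(inj_eq perm_inj). Qed.

Lemma partE t (A : mcube (2 ^ t)) k (t1 t2 t3 t4 : PT (2 ^ t)) :
  (forall e, ~~ E7 A k e t1 t2 t3 t4) ->
  forall T, is_transversal_set (apply_sigma (@boolB t) t1 t2 t3 t4) T ->
  nconf (apply_sigma (@boolB t) t1 t2 t3 t4) A T <= k.
Proof.
move=> H T [cT hpair h3].
case: (set_0Vmem T) => [-> | [c0 c0T]].
  rewrite /nconf (_ : [set c in set0 | _] = set0) ?cards0 //.
  by apply/setP => c; rewrite !inE.
pose p := xo ((t1^-1)%g c0.1.1) ((t2^-1)%g c0.1.2).
pose q := xo ((t1^-1)%g c0.1.1) ((t3^-1)%g c0.2).
have claim : forall c, c \in T ->
    (t2^-1)%g c.1.2 = xo ((t1^-1)%g c.1.1) p /\ (t3^-1)%g c.2 = xo ((t1^-1)%g c.1.1) q.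
  move=> c cT'; case: (c =P c0) => [-> | ne].
    by rewrite /p /q; split; bits_solve.
  have ne' : c != c0 by apply/eqP.
  have [hr hc hf hs] := hpair c c0 cT' c0T ne'.
  have [C [[hC cC c0C] _]] := h3 c c0 cT' c0T ne'.
  move: hC => /existsP [i1 /existsP [i2 /existsP [j1 /existsP [j2 /existsP [k1 /existsP [k2
      /existsP [x1 /existsP [x2 /andP [pat /eqP CE]]]]]]]]].
  rewrite CE !inE in cC c0C.
  move: pat => /and5P [_ _ _ /and4P [/eqP e1 /eqP e2 /eqP e3 _] _].
  have DJ := xpair1 (etrans (Lsym e1) (esym (Lsym e2))).
  have DK := xpair2 (etrans (Lsym e1) (esym (Lsym e3))).
  move: cC c0C => /and3P [ci cj ck] /and3P [c0i c0j c0k].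
  have hi := two_vals (orV t1 ci) (orV t1 c0i).
  have hj := two_vals (orV t2 cj) (orV t2 c0j); rewrite -DJ in hj.
  have hk := two_vals (orV t3 ck) (orV t3 c0k); rewrite -DK -DJ in hk.
  apply: (diag_core hi hj hk).
  - by move=> [x y]; apply: hr; split; [exact: (perm_inj x) | exact: (perm_inj y)].
  - by move=> [x y]; apply: hc; split; [exact: (perm_inj x) | exact: (perm_inj y)].
  - by move=> [x y]; apply: hf; split; [exact: (perm_inj x) | exact: (perm_inj y)].
  - by move=> e; apply: hs; rewrite /Lc !LE e.
have := H (p, q); rewrite /E7 /ev -ltnNge /= => Hl; apply: leq_trans (ltnW Hl).
apply: (card_inj_le (f := fun c : cell (2 ^ t) => (t1^-1)%g c.1.1)).
  move=> c c'; rewrite !inE => /andP [cT' _] /andP [cT'' _] e.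
  have [h1 h2] := claim c cT'; have [h1' h2'] := claim c' cT''.
  rewrite /= e -h1' -h2' in h1 h2.
  move: c c' e h1 h2 {cT' cT'' h1' h2'} => [[ci cj] ck] [[ci' cj'] ck'] /= /perm_inj -> /perm_inj -> /perm_inj -> //.
move=> c; rewrite !inE => /andP [cT' hc].
have [h1 h2] := claim c cT'.
move: hc; rewrite /conflict /Lc LE h1 h2.
move: c h1 h2 {cT'} => [[ci cj] ck] /= h1 h2.
have -> : A ci cj ck = A (t1 ((t1^-1)%g ci)) (t2 (xo ((t1^-1)%g ci) p)) (t3 (xo ((t1^-1)%g ci) q)).
  by rewrite -h1 -h2 !permKV.
rewrite (_ : xo (xo ((t1^-1)%g ci) (xo ((t1^-1)%g ci) p)) (xo ((t1^-1)%g ci) q)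
   = xo (xo ((t1^-1)%g ci) p) q) //.
bits_solve.
Qed.

Lemma cardU_le (T : finType) (X Y : {set T}) : #|X :|: Y| <= #|X| + #|Y|.
Proof. exact: (leq_card_setU X Y).1. Qed.

Lemma xbd t (X bb d : II t) : X = xo bb d -> X = bb -> d = z0 t.
Proof.
move=> -> e; apply: (@xo_injr _ bb); by rewrite e xo0.
Qed.

Lemma neq_xo t (i d : II t) : d != z0 t -> i != xo i d.
Proof.
move=> nz; apply/eqP => e; move/eqP: nz; apply; apply: (@xo_injr _ i).
by rewrite xo0 -e.
Qed.

Lemma partF t (A : mcube (2 ^ t)) g m (t1 t2 t3 t4 : PT (2 ^ t)) (i0 j0 k0 : II t) :
  is_mcube g A ->
  ~~ F1 A m (i0, j0, k0) t1 t2 t3 t4 -> ~~ F2 A m (i0, j0, k0) t1 t2 t3 t4 ->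
  ~~ F3 A m (i0, j0, k0) t1 t2 t3 t4 ->
  2 ^ t + 2 <= #|[set C | allowed_3cube (apply_sigma (@boolB t) t1 t2 t3 t4) A C
                 && (((t1 i0, t2 j0), t3 k0) \in C)]| + 2 * g + 3 * m.
Proof.
move=> [h0 [h1 [h2 h3]]].
rewrite /F1 /F2 /F3 /ev -!ltnNge => hc1 hc2 hc3.
pose C1 := [set d | t1 (xo i0 d) \in (if d == z0 t then set0 else
     [set i | t4 (xo (xo (xo i0 j0) k0) d) \in A i (t2 (xo j0 d)) (t3 k0)] :|:
     [set i | t4 (xo (xo i0 j0) k0) \in A i (t2 j0) (t3 k0)])].
pose C2 := [set d | t2 (xo j0 d) \in (if d == z0 t then set0 else
     [set j | t4 (xo (xo (xo i0 j0) k0) d) \in A (t1 i0) j (t3 (xo k0 d))] :|: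
     [set j | t4 (xo (xo i0 j0) k0) \in A (t1 (xo i0 d)) j (t3 (xo k0 d))])].
pose C3 := [set d | t3 (xo k0 d) \in (if d == z0 t then set0 else
     [set kk | t4 (xo (xo (xo i0 j0) k0) d) \in A (t1 (xo i0 d)) (t2 j0) kk] :|:
     [set kk | t4 (xo (xo i0 j0) k0) \in A (t1 i0) (t2 j0) kk])].
have hC1 : #|C1| < m := hc1.
have hC2 : #|C2| < m := hc2.
have hC3 : #|C3| < m := hc3.
pose D1 := [set d | t4 (xo (xo (xo i0 j0) k0) d) \in A (t1 i0) (t2 j0) (t3 k0)].
pose D2 := [set d | t4 (xo (xo i0 j0) k0) \in A (t1 i0) (t2 (xo j0 d)) (t3 k0)].
have hD1 : #|D1| <= g.
  apply: leq_trans (h0 (t1 i0) (t2 j0) (t3 k0)).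
  apply: (card_inj_le (f := fun d => t4 (xo (xo (xo i0 j0) k0) d))).
    by move=> d d' _ _ /perm_inj /xo_injr.
  by move=> d; rewrite inE.
have hD2 : #|D2| <= g.
  apply: leq_trans (h1 (t1 i0) (t3 k0) (t4 (xo (xo i0 j0) k0))).
  apply: (card_inj_le (f := fun d => t2 (xo j0 d))).
    by move=> d d' _ _ /perm_inj /xo_injr.
  by move=> d; rewrite !inE.
pose U := [set z0 t] :|: D1 :|: D2 :|: C1 :|: C2 :|: C3.
have u1 := cardU_le [set z0 t] D1.
have u2 := cardU_le ([set z0 t] :|: D1) D2.
have u3 := cardU_le ([set z0 t] :|: D1 :|: D2) C1.
have u4 := cardU_le ([set z0 t] :|: D1 :|: D2 :|: C1) C2.
have u5 := cardU_le ([set z0 t] :|: D1 :|: D2 :|: C1 :|: C2) C3.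
have cU := cardsC U; rewrite card_ord in cU.
rewrite cards1 in u1.
pose Cd d := cube8 (t1 i0) (t1 (xo i0 d)) (t2 j0) (t2 (xo j0 d)) (t3 k0) (t3 (xo k0 d)).
have key : forall d, d \in ~: U ->
   allowed_3cube (apply_sigma (@boolB t) t1 t2 t3 t4) A (Cd d)
                 && (((t1 i0, t2 j0), t3 k0) \in Cd d).
  move=> d; rewrite in_setC /U /D1 /D2 /C1 /C2 /C3 !inE => /norP [/norP [/norP [/norP [/norP [nz nD1] nD2] nC1] nC2] nC3].
  rewrite (negbTE nz) !inE in nC1 nC2 nC3.
  move/norP: nC1 => [a1 a2]; move/norP: nC2 => [b1 b2]; move/norP: nC3 => [c1 c2].
  rewrite /= !eqxx !orTb !andbT.
  apply/existsP; exists (t1 i0); apply/existsP; exists (t1 (xo i0 d)).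
  apply/existsP; exists (t2 j0); apply/existsP; exists (t2 (xo j0 d)).
  apply/existsP; exists (t3 k0); apply/existsP; exists (t3 (xo k0 d)).
  apply/existsP; exists (t4 (xo (xo i0 j0) k0)).
  apply/existsP; exists (t4 (xo (xo (xo i0 j0) k0) d)).
  apply/and3P; split => //.
    rewrite /cube_pattern !LEt !(inj_eq perm_inj) !neq_xo //=.
    by apply/andP; split; apply/and4P; split; apply/eqP; bits_solve.
  apply/forallP => [[[u v] w]]; apply/implyP; rewrite !inE /=.
  case/and3P => [/orP [] /eqP -> /orP [] /eqP -> /orP [] /eqP ->];
    rewrite /Lc /= LEt (inj_eq perm_inj);
    first [ rewrite ifT; last (by apply/eqP; bits_solve)
          | rewrite ifF; last (by apply/negbTE/eqP => e; move/eqP: nz; apply; apply: (xbd _ e); bits_solve) ];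
    done.
have inj : {in ~: U &, injective Cd}.
  move=> d d' dG d'G e.
  have nz : d != z0 t.
    by move: dG; rewrite in_setC /U !inE => /norP [/norP [/norP [/norP [/norP []]]]].
  have : ((t1 (xo i0 d), t2 j0), t3 k0) \in Cd d' by rewrite -e !inE !eqxx !orbT.
  rewrite !inE /= !eqxx /= andbT => /orP [/eqP /perm_inj h | /eqP /perm_inj /xo_injr //].
  by move: (neq_xo i0 nz); rewrite h eqxx.
have cnt : #|~: U| <= #|[set C | allowed_3cube (apply_sigma (@boolB t) t1 t2 t3 t4) A C
                 && (((t1 i0, t2 j0), t3 k0) \in C)]|.
  rewrite -(card_in_imset inj); apply: subset_leq_card.
  apply/subsetP => C /imsetP [d dG ->]; rewrite inE; exact: key.
rewrite /U in cU cnt.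
lia.
Qed.

Import Order.TTheory GRing.Theory Num.Theory.
Local Open Scope ring_scope.

Lemma exists_good (R : realFieldType) (gamma : R) t g k m (A : mcube (2 ^ t)) :
  is_mcube g A ->
  (g%:R = gamma * (2 ^ t)%N%:R :> R) ->
  (7 * (2 ^ t)%N%:R ^+ 2 * (gamma * (2 ^ t)%N%:R) ^+ k / (k`!)%:R
             + 3 * (2 ^ t)%N%:R ^+ 3 * (2 * gamma * (2 ^ t)%N%:R) ^+ m / (m`!)%:R < 1 :> R) ->
  exists t1 t2 t3 t4 : PT (2 ^ t), ~~ Bad A k m t1 t2 t3 t4.
Proof.
move=> hA hg hineq.
have [X [Y [h1 h2 h3]]] := bad_sum k m hA.
set N := ((2 ^ t)`! ^ 4)%N in h2 h3.
have NP : (0 < N)%N by rewrite expn_gt0 fact_gt0.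
suff lt : (X + Y < N)%N.
  case: (boolP [exists t1, exists t2, exists t3, exists t4, ~~ Bad A k m t1 t2 t3 t4]).
    by move=> /existsP [t1 /existsP [t2 /existsP [t3 /existsP [t4 H]]]]; exists t1, t2, t3, t4.
  rewrite negb_exists => /forallP H.
  have : (S4 (fun a b c d => (Bad A k m a b c d : nat)) = N)%N.
    rewrite /N -S4_1; rewrite /S4; apply: eq_bigr => a _; apply: eq_bigr => b _.
    apply: eq_bigr => c _; apply: eq_bigr => d _.
    move: (H a); rewrite negb_exists => /forallP /(_ b).
    rewrite negb_exists => /forallP /(_ c); rewrite negb_exists => /forallP /(_ d).
    by rewrite negbK => ->.
  move=> e; move: h1; rewrite e; lia.
rewrite -(ltr_nat R) natrD.
set nR := (2 ^ t)%N%:R : R.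
rewrite -hg (_ : 2 * gamma * nR = 2 * g%:R) in hineq; last by rewrite -mulrA -hg.
have kP : (0 : R) < (k`!)%:R by rewrite ltr0n fact_gt0.
have mP : (0 : R) < (m`!)%:R by rewrite ltr0n fact_gt0.
have NR : (0 : R) < N%:R by rewrite ltr0n.
rewrite -!(ler_nat R) !natrM !natrX in h2 h3.
have hX : X%:R <= (7 * nR ^+ 2 * g%:R ^+ k / (k`!)%:R) * N%:R.
  rewrite mulrAC ler_pdivlMr //; move: h2; rewrite /nR natrX.
  by rewrite (_ : (7 : nat)%:R = 7 :> R) //; move=> h2; apply: le_trans h2 _; rewrite -!mulrA !natrM; lra.
have hY : Y%:R <= (3 * nR ^+ 3 * (2 * g%:R) ^+ m / (m`!)%:R) * N%:R.
  rewrite mulrAC ler_pdivlMr //; move: h3; rewrite /nR natrX.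
  move=> h3; apply: le_trans h3 _; rewrite -!mulrA !natrM; lra.
apply: le_lt_trans (lerD hX hY) _.
rewrite -mulrDl -[X in _ < X]mul1r ltr_pM2r //.
Qed.

Unset Implicit Arguments. Set Strict Implicit.

Theorem mainTheorem2 (R : realFieldType) (alpha gamma kappa : R)
    (t g k m : nat)
    (hg : g%:R = gamma * (2 ^ t)%N%:R)
    (hk : k%:R = kappa * (2 ^ t)%N%:R)
    (hm : m%:R = (1 - alpha - 2 * gamma) * (2 ^ t)%N%:R / 3)
    (hineq : 7 * (2 ^ t)%N%:R ^+ 2 * (gamma * (2 ^ t)%N%:R) ^+ k / (k`!)%:R
             + 3 * (2 ^ t)%N%:R ^+ 3 * (2 * gamma * (2 ^ t)%N%:R) ^+ m / (m`!)%:R < 1)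
    (A : mcube (2 ^ t)) (hA : is_mcube g A) :
  exists t1 t2 t3 t4 : {perm 'I_(2 ^ t)},
    let L := apply_sigma (@boolB t) t1 t2 t3 t4 in
    (* (a) rows *)
    (forall i kk : 'I_(2 ^ t), (nconf L A (row_set i kk) <= k)%N) /\
    (* (b) columns *)
    (forall j kk : 'I_(2 ^ t), (nconf L A (col_set j kk) <= k)%N) /\
    (* (c) files *)
    (forall i j : 'I_(2 ^ t), (nconf L A (file_set i j) <= k)%N) /\
    (* (d) symbol-sets (row layer, column layer, file layer) *)
    (forall l s : 'I_(2 ^ t),
       [/\ (nconf L A (rowlayer_symset L l s) <= k)%N,
           (nconf L A (collayer_symset L l s) <= k)%N &
           (nconf L A (filelayer_symset L l s) <= k)%N]) /\
    (* (e) transversal-sets *)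
    (forall T : {set cell (2 ^ t)}, is_transversal_set L T ->
       (nconf L A T <= k)%N) /\
    (* (f) allowed 3-cubes *)
    (forall c : cell (2 ^ t),
       alpha * (2 ^ t)%N%:R <=
       #|[set C : {set cell (2 ^ t)} | allowed_3cube L A C && (c \in C)]|%:R).
Proof.
have [t1 [t2 [t3 [t4 good]]]] := exists_good hA hg hineq.
exists t1, t2, t3, t4; cbv zeta.
move: good; rewrite /Bad negb_or => /andP [gE gF].
have gE' : forall e, ~~ EE A k e t1 t2 t3 t4.
  by move=> e; apply: contra gE => h; apply/existsP; exists e.
have gF' : forall c, ~~ FF A m c t1 t2 t3 t4.
  by move=> c; apply: contra gF => h; apply/existsP; exists c.
have gEi : forall e, [/\ ~~ E1 A k e t1 t2 t3 t4, ~~ E2 A k e t1 t2 t3 t4,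
   ~~ E3 A k e t1 t2 t3 t4, ~~ E4 A k e t1 t2 t3 t4 &
   [/\ ~~ E5 A k e t1 t2 t3 t4, ~~ E6 A k e t1 t2 t3 t4 & ~~ E7 A k e t1 t2 t3 t4]].
  move=> e; move: (gE' e); rewrite /EE.
  by case: (E1 _ _ _ _ _ _ _); case: (E2 _ _ _ _ _ _ _); case: (E3 _ _ _ _ _ _ _);
     case: (E4 _ _ _ _ _ _ _); case: (E5 _ _ _ _ _ _ _); case: (E6 _ _ _ _ _ _ _);
     case: (E7 _ _ _ _ _ _ _).
have gFi : forall c, [/\ ~~ F1 A m c t1 t2 t3 t4, ~~ F2 A m c t1 t2 t3 t4 &
   ~~ F3 A m c t1 t2 t3 t4].
  move=> c; move: (gF' c); rewrite /FF.
  by case: (F1 _ _ _ _ _ _ _); case: (F2 _ _ _ _ _ _ _); case: (F3 _ _ _ _ _ _ _).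
split; [|split; [|split; [|split; [|split]]]].
- by move=> i kk; apply: partA; case: (gEi ((t1^-1)%g i, (t3^-1)%g kk)).
- by move=> i kk; apply: partB; case: (gEi ((t2^-1)%g i, (t3^-1)%g kk)).
- by move=> i kk; apply: partC; case: (gEi ((t1^-1)%g i, (t2^-1)%g kk)).
- move=> l s; split.
  + by apply: partD1; case: (gEi ((t1^-1)%g l, (t4^-1)%g s)).
  + by apply: partD2; case: (gEi ((t2^-1)%g l, (t4^-1)%g s)) => _ _ _ _ [].
  + by apply: partD3; case: (gEi ((t3^-1)%g l, (t4^-1)%g s)) => _ _ _ _ [].
- by apply: partE => e; case: (gEi e) => _ _ _ _ [].
move=> [[ci cj] ck].
rewrite -(permKV t1 ci) -(permKV t2 cj) -(permKV t3 ck).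
have [f1 f2 f3] := gFi ((t1^-1)%g ci, (t2^-1)%g cj, (t3^-1)%g ck).
have := partF hA f1 f2 f3.
rewrite -(ler_nat R) !natrD ?natrM ?addr0.
set cnt := (#|_|)%:R.
set nR := (2 ^ t)%N%:R.
move=> h.
have e : 3 * m%:R = nR - alpha * nR - 2 * g%:R.
  by rewrite hm hg /nR; field.
move: h e.
lra.
Qed.
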